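(* In the setting of the context, fix $j\in\{1,2,3\}$ and let $A_1:=\Lambda_g$, $A_2=A_3:=\Lambda$. Assume there exists $\lambda_0\in A_j$ with $\Phi_j(\lambda_0)<1$, and that $\widehat X_{\lambda_k}\to+\infty$ in probability as $k\to\infty$ for every sequence $(\lambda_k)\subset A_j$ with $|\lambda_k|\to\infty$. Then there exists $M>0$ such that $$\inf_{\lambda\in A_j}\Phi_j(\lambda)=\inf_{\lambda\in A_j,\ |\lambda|\le M}\Phi_j(\lambda).$$
   Context: Let $X$ be a real random variable with continuous c.d.f. $F_X$ and $\mathcal X_n=(X_1,\dots,X_n)$ a random vector on the same probability space. Let $\Lambda\subseteq\mathbb R^n$, $g:\Lambda\times\mathbb R^n\to\mathbb R$ measurable, $\widehat X_\lambda:=g(\lambda,\mathcal X_n)$, and $\Lambda_g:=\{\lambda\in\Lambda:F_X(\widehat X_\lambda)\text{ is uniform on }(0,1)\}$. $|\cdot|$ is the Euclidean norm. For $\gamma>0$ define $\Phi_1(\lambda)=\mathbf E F_X(X\vee\widehat X_\lambda)$, $\Phi_2(\lambda)=2\,\mathbf E F_X(X\vee\widehat X_\lambda)-\mathbf E F_X(\widehat X_\lambda)$, $\Phi_3(\lambda)=\Phi_2(\lambda)+\gamma\big[\mathbf E F_X^2(\widehat X_\lambda)-\mathbf E[F_X(\widehat X_\lambda)\vee Y_\lambda]\big]$, where $Y_\lambda$ is a copy of $F_X(\widehat X_\lambda)$ independent of $F_X(\widehat X_\lambda)$, and $a\vee b=\max\{a,b\}$. *)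

(* Defs.v *)
From HB Require Import structures.
From mathcomp Require Import all_boot all_order all_algebra.
From mathcomp Require Import all_classical all_reals all_analysis.
Set Implicit Arguments. Unset Strict Implicit. Unset Printing Implicit Defensive.
Import Order.TTheory GRing.Theory Num.Theory.
Import numFieldNormedType.Exports.
Local Open Scope classical_set_scope.
Local Open Scope ring_scope.

Section defs.
Context {d : measure_display} {T : measurableType d} {R : realType}.
Variable P : probability T R.

(* c.d.f. of a real function X on the probability space: F_X(r) = P[X <= r]
   (this is what the library's [cdf X r] unfolds to, made real-valued). *)
Definition Fcdf (X : T -> R) (r : R) : R := fine (P (X @^-1` `]-oo, r])).

(* Euclidean norm on R^n (represented as n.-tuple R, with its product
   Borel sigma-algebra) *)
Definition enorm {n : nat} (l : n.-tuple R) : R :=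
  Num.sqrt (\sum_(i < n) tnth l i ^+ 2).

(* measurability of f : D -> R for the trace sigma-algebra on D *)
Definition measurable_on {d' : measure_display} {U : measurableType d'}
  (D : set U) (f : U -> R) : Prop :=
  forall B : set R, measurable B ->
    exists C : set U, measurable C /\ D `&` f @^-1` B = D `&` C.

Definition Xhat {n : nat} (g : n.-tuple R * n.-tuple R -> R)
  (Xn : T -> n.-tuple R) (l : n.-tuple R) : T -> R :=
  fun w => g (l, Xn w).

Definition Lam_g {n : nat} (X : T -> R) (Xn : T -> n.-tuple R)
  (g : n.-tuple R * n.-tuple R -> R) (Lam : set (n.-tuple R)) :
  set (n.-tuple R) :=
  [set l | Lam l /\ forall A : set R, measurable A ->
     P ((Fcdf X \o Xhat g Xn l) @^-1` A) = uniform_prob (@ltr01 R) A].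

Local Open Scope ereal_scope.

Definition Phi1 {n : nat} (X : T -> R) (Xn : T -> n.-tuple R)
  (g : n.-tuple R * n.-tuple R -> R) (l : n.-tuple R) : \bar R :=
  \int[P]_w (Fcdf X (Num.max (X w) (Xhat g Xn l w)))%:E.

Definition Phi2 {n : nat} (X : T -> R) (Xn : T -> n.-tuple R)
  (g : n.-tuple R * n.-tuple R -> R) (l : n.-tuple R) : \bar R :=
  2%:E * Phi1 X Xn g l - \int[P]_w (Fcdf X (Xhat g Xn l w))%:E.

(* E[F_X(\hat X_l) v Y_l] with Y_l an independent copy of F_X(\hat X_l):
   computed on the product space (T x T, P (x) P), i.e. as the double integral *)
Definition Phi3 {n : nat} (gamma : R) (X : T -> R) (Xn : T -> n.-tuple R)
  (g : n.-tuple R * n.-tuple R -> R) (l : n.-tuple R) : \bar R :=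
  Phi2 X Xn g l + gamma%:E *
    (\int[P]_w ((Fcdf X (Xhat g Xn l w)) ^+ 2)%:E
     - \int[P]_w \int[P]_w'
         (Num.max (Fcdf X (Xhat g Xn l w)) (Fcdf X (Xhat g Xn l w')))%:E).

Definition Phi {n : nat} (j : nat) (gamma : R) (X : T -> R) (Xn : T -> n.-tuple R)
  (g : n.-tuple R * n.-tuple R -> R) : n.-tuple R -> \bar R :=
  match j with
  | 1%N => Phi1 X Xn g
  | 2%N => Phi2 X Xn g
  | _ => Phi3 gamma X Xn g
  end.

Definition Aset {n : nat} (j : nat) (X : T -> R) (Xn : T -> n.-tuple R)
  (g : n.-tuple R * n.-tuple R -> R) (Lam : set (n.-tuple R)) : set (n.-tuple R) :=
  if j == 1%N then Lam_g X Xn g Lam else Lam.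

End defs.

(* Main.v *)
Require Import Defs.
From HB Require Import structures.
From mathcomp Require Import all_boot all_order all_algebra.
From mathcomp Require Import all_classical all_reals all_analysis.
From mathcomp Require Import measurable_realfun.
From mathcomp Require Import ring lra.
Import Order.TTheory GRing.Theory Num.Theory.
Import numFieldNormedType.Exports.
Local Open Scope classical_set_scope.
Local Open Scope ring_scope.
Section S.
Context (d : measure_display) (T : measurableType d) (R : realType)
  (P : probability T R) (X : T -> R).
Hypothesis mX : measurable_fun setT X.

Lemma mpre (B : set R) : measurable B -> measurable (X @^-1` B).
Proof. by move=> mB; rewrite -[X @^-1` _]setTI; exact: mX. Qed.

Lemma Pfin (A : set T) : measurable A -> P A \is a fin_num.
Proof. by move=> mA; exact: fin_num_measure. Qed.

Lemma Fcdf_ge0 r : 0 <= Fcdf P X r.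
Proof. by rewrite /Fcdf fine_ge0. Qed.

Lemma Fcdf_le1 r : Fcdf P X r <= 1.
Proof.
rewrite /Fcdf -lee_fin fineK; last by apply: Pfin; apply: mpre; exact: measurable_itv.
by apply: probability_le1; apply: mpre; exact: measurable_itv.
Qed.

Lemma Fcdf_nd r s : r <= s -> Fcdf P X r <= Fcdf P X s.
Proof.
move=> rs; rewrite /Fcdf; apply: fine_le; try (apply: Pfin; apply: mpre; exact: measurable_itv).
apply: le_measure; rewrite ?inE; try (apply: mpre; exact: measurable_itv).
move=> w /=; rewrite !in_itv /= => h; rewrite (le_trans h rs).
done.
Qed.

Lemma Fcdf_big (eta : R) : 0 < eta -> exists M, 1 - eta <= Fcdf P X M.
Proof.
move=> e0.
have : (P \o (fun k : nat => X @^-1` `]-oo, k%:R])) @ \oo --> P (\bigcup_k X @^-1` `]-oo, k%:R]).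
  apply: nondecreasing_cvg_mu.
  - by move=> k; apply: mpre; exact: measurable_itv.
  - by apply: bigcupT_measurable => k; apply: mpre; exact: measurable_itv.
  - move=> m k mk; apply/subsetPset => w /=; rewrite !in_itv /= => h.
    by rewrite (le_trans h)// ler_nat.
have -> : \bigcup_k X @^-1` `]-oo, k%:R] = setT.
  apply/seteqP; split=> // w _ /=.
  exists (Num.bound `|X w|) => //=; rewrite in_itv /=.
  by rewrite (le_trans (ler_norm _))// ltW// archi_boundP.
rewrite probability_setT => h.
have e1 : ((1 - eta)%:E < 1)%E by rewrite lte_fin ltrBlDr ltrDl.
have [k /= hk] := @filter_ex _ (nbhs \oo) _ _ (h _ (open_ereal_gt' e1)).
exists k%:R; rewrite /Fcdf -lee_fin fineK; first exact: ltW.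
by apply: Pfin; apply: mpre; exact: measurable_itv.
Qed.

Lemma mXhat n (Xn : T -> n.-tuple R) (g : n.-tuple R * n.-tuple R -> R)
  (Lam : set (n.-tuple R)) l :
  measurable_fun setT Xn -> measurable_on (Lam `*` setT) g -> Lam l ->
  measurable_fun setT (Xhat g Xn l).
Proof.
move=> mXn mg Ll _ B mB; have [C [mC hC]] := mg B mB.
have -> : setT `&` Xhat g Xn l @^-1` B = setT `&` (fun w => (l, Xn w)) @^-1` C.
  apply/seteqP; split => w [_ hw]; split => //=.
    have : ((Lam `*` setT) `&` g @^-1` B) (l, Xn w) by split.
    by rewrite hC => -[].
  have : ((Lam `*` setT) `&` C) (l, Xn w) by split.
  by rewrite -hC => -[].
by apply: measurable_fun_pair => //; exact: measurable_cst.
Qed.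

Local Open Scope ereal_scope.

Lemma low_int (f : T -> R) (E : set T) (c : R) : measurable E ->
  measurable_fun setT f -> (forall w, (0 <= f w)%R) -> (0 <= c)%R ->
  (forall w, E w -> (c <= f w)%R) ->
  c%:E * P E <= \int[P]_w (f w)%:E.
Proof.
move=> mE mf f0 c0 cf.
have -> : c%:E * P E = \int[P]_w (c * \1_E w)%:E.
  rewrite (integralZl_indic _ (fun _ => E))//; last by move=> h; move: (lt_le_trans h c0); rewrite ltxx.
  by rewrite integral_indic// setIT.
apply: ge0_le_integral => //.
- by move=> w _; rewrite lee_fin mulr_ge0// indic_ge0.
- apply/measurable_EFinP; apply: measurable_funM; first exact: measurable_cst.
  exact: measurable_indic.
- by apply/measurable_EFinP.
- move=> w _; rewrite lee_fin indicE; case: (boolP (w \in E)) => wE.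
    by rewrite mulr1 cf//; exact: set_mem.
  by rewrite mulr0.
Qed.

Lemma up_int (f : T -> R) : measurable_fun setT f -> (forall w, (0 <= f w)%R) ->
  (forall w, (f w <= 1)%R) -> \int[P]_w (f w)%:E <= 1.
Proof.
move=> mf f0 f1.
apply: (@le_trans _ _ (\int[P]_w (cst 1%E w))); last first.
  by rewrite integral_cst// /= probability_setT mul1e.
apply: ge0_le_integral => //.
- by move=> w _; rewrite lee_fin.
- by apply/measurable_EFinP.
- by move=> w _; rewrite lee_fin.
Qed.

Lemma up_nest (a : T -> R) : measurable_fun setT a -> (forall w, (0 <= a w)%R) ->
  (forall w, (a w <= 1)%R) ->
  \int[P]_w \int[P]_w' (Num.max (a w) (a w'))%:E <= 1.
Proof.
move=> ma a0 a1.
have mw w : measurable_fun setT (fun w' => Num.max (a w) (a w')).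
  by apply: measurable_maxr => //; exact: measurable_cst.
apply: (@le_trans _ _ (\int[P]_w (cst 1%E w))); last first.
  by rewrite integral_cst// /= probability_setT mul1e.
apply: ge0_le_integral => //.
- by move=> w _; apply: integral_ge0 => w' _; rewrite lee_fin le_max a0.
- apply: (@measurable_fun_fubini_tonelli_F _ _ _ _ _ P
    (fun z => (Num.max (a z.1) (a z.2))%:E)).
    apply/measurable_EFinP; apply: measurable_maxr.
      exact: measurableT_comp ma measurable_fst.
    exact: measurableT_comp ma measurable_snd.
  by move=> z; rewrite lee_fin le_max a0.
- move=> w _; apply: up_int => // w'; first by rewrite le_max a0.
  by rewrite ge_max !a1.
Qed.

Hypothesis cF : continuous (Fcdf P X).

Lemma mF : measurable_fun setT (Fcdf P X).
Proof. exact: continuous_measurable_fun. Qed.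

Lemma PE_bound (Y : T -> R) (eta M : R) : measurable_fun setT Y ->
  (0 < eta < 1)%R -> P [set w | (Y w <= M)%R] <= eta%:E ->
  measurable (~` [set w | (Y w <= M)%R]) /\
  exists q : R, (0 <= q <= eta)%R /\ P (~` [set w | (Y w <= M)%R]) = (1 - q)%:E.
Proof.
move=> mY /andP[e0 e1] hP.
have eS : [set w | (Y w <= M)%R] = Y @^-1` `]-oo, M].
  by apply/seteqP; split => w /=; rewrite in_itv.
have mS : measurable [set w | (Y w <= M)%R].
  by rewrite eS -[Y @^-1` _]setTI; apply: mY => //; exact: measurable_itv.
split; first exact: measurableC.
exists (fine (P [set w | (Y w <= M)%R])).
have fS : P [set w | (Y w <= M)%R] \is a fin_num by exact: fin_num_measure.
rewrite probability_setC// EFinB fineK//; split => //.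
by rewrite fine_ge0//= -lee_fin fineK.
Qed.

Lemma key1 (Y : T -> R) (eta M : R) : measurable_fun setT Y ->
  (0 < eta < 1)%R -> (1 - eta <= Fcdf P X M)%R ->
  P [set w | (Y w <= M)%R] <= eta%:E ->
  ((1 - eta) * (1 - eta))%:E <= \int[P]_w (Fcdf P X (Num.max (X w) (Y w)))%:E.
Proof.
move=> mY he hM hP; have [mE [q [/andP[q0 qe] PE]]] := PE_bound _ _ _ mY he hP.
move: he => /andP[e0 e1].
apply: le_trans (low_int _ _ (Fcdf P X M) mE _ _ _ _).
- rewrite PE -EFinM lee_fin; apply: ler_pM; lra.
- exact: measurableT_comp mF (measurable_maxr mX mY).
- by move=> w; exact: Fcdf_ge0.
- exact: Fcdf_ge0.
- move=> w /= /negP; rewrite -ltNge => /ltW h; apply: Fcdf_nd.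
  by rewrite le_max h orbT.
Qed.

Lemma key2 (Y : T -> R) (eta M : R) : measurable_fun setT Y ->
  (0 < eta < 1)%R -> (1 - eta <= Fcdf P X M)%R ->
  P [set w | (Y w <= M)%R] <= eta%:E ->
  ((1 - eta) ^+ 2 * (1 - eta))%:E <= \int[P]_w ((Fcdf P X (Y w)) ^+ 2)%:E.
Proof.
move=> mY he hM hP; have [mE [q [/andP[q0 qe] PE]]] := PE_bound _ _ _ mY he hP.
move: he => /andP[e0 e1].
apply: le_trans (low_int _ _ (Fcdf P X M ^+ 2) mE _ _ _ _).
- rewrite PE -EFinM lee_fin; apply: ler_pM; try lra.
  + exact: sqr_ge0.
  + by rewrite !expr2; nra.
- apply: measurable_funX; exact: measurableT_comp mF mY.
- by move=> w; exact: sqr_ge0.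
- exact: sqr_ge0.
- move=> w /= /negP; rewrite -ltNge => /ltW h.
  have := Fcdf_nd _ _ h; have := Fcdf_ge0 M; rewrite !expr2 => ? ?; nra.
Qed.

Lemma Phi_low n (Xn : T -> n.-tuple R) (g : n.-tuple R * n.-tuple R -> R) l
  (j : nat) (gamma eta M : R) :
  measurable_fun setT (Xhat g Xn l) -> (0 < gamma)%R -> (1 <= j <= 3)%N ->
  (0 < eta < 1)%R -> (1 - eta <= Fcdf P X M)%R ->
  P [set w | (Xhat g Xn l w <= M)%R] <= eta%:E ->
  (1 - (4 + 3 * gamma) * eta)%:E <= Phi P j gamma X Xn g l.
Proof.
move=> mY g0 hj he hM hP.
have k1 := key1 _ _ _ mY he hM hP; have k2 := key2 _ _ _ mY he hM hP.
have mFY : measurable_fun setT (fun w => Fcdf P X (Xhat g Xn l w)).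
  exact: measurableT_comp mF mY.
have u1 : \int[P]_w (Fcdf P X (Xhat g Xn l w))%:E <= 1.
  by apply: up_int => // w; [exact: Fcdf_ge0|exact: Fcdf_le1].
have u2 := up_nest _ mFY (fun w => Fcdf_ge0 _) (fun w => Fcdf_le1 _).
move: he => /andP[e0 e1].
have h2 : (2 * ((1 - eta) * (1 - eta)) - 1)%:E <= Phi2 P X Xn g l.
  rewrite /Phi2 EFinB EFinM; apply: leeB => //.
  by apply: lee_wpmul2l => //; rewrite lee_fin.
have h3 : (2 * ((1 - eta) * (1 - eta)) - 1 + gamma * ((1 - eta) ^+ 2 * (1 - eta) - 1))%:E
   <= Phi3 P gamma X Xn g l.
  rewrite /Phi3 EFinD; apply: leeD => //.
  rewrite EFinM; apply: lee_wpmul2l; first by rewrite lee_fin ltW.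
  by rewrite EFinB; apply: leeB.
have b3 : (1 - 3 * eta <= (1 - eta) ^+ 2 * (1 - eta))%R.
  rewrite expr2; nra.
case: j hj => [|[|[|[|j]]]] //= _.
- apply: le_trans k1; rewrite lee_fin; nra.
- apply: le_trans h2; rewrite lee_fin; nra.
- apply: le_trans h3; rewrite lee_fin; nra.
Qed.
End S.

Theorem mainTheorem11 (d : measure_display) (T : measurableType d) (R : realType)
  (P : probability T R) (n : nat) (X : T -> R) (Xn : T -> n.-tuple R)
  (Lam : set (n.-tuple R)) (g : n.-tuple R * n.-tuple R -> R)
  (gamma : R) (j : nat) :
  measurable_fun setT X ->
  measurable_fun setT Xn ->
  continuous (Fcdf P X) ->
  measurable_on (Lam `*` setT) g ->
  0 < gamma ->
  (1 <= j <= 3)%N ->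
  (exists l0, Aset P j X Xn g Lam l0 /\ (Phi P j gamma X Xn g l0 < 1)%E) ->
  (forall lam : nat -> n.-tuple R,
     (forall k, Aset P j X Xn g Lam (lam k)) ->
     enorm (lam k) @[k --> \oo] --> +oo ->
     forall M : R, P [set w | Xhat g Xn (lam k) w <= M] @[k --> \oo] --> 0%E) ->
  exists M : R, 0 < M /\
    ereal_inf [set Phi P j gamma X Xn g l | l in Aset P j X Xn g Lam] =
    ereal_inf [set Phi P j gamma X Xn g l |
                 l in Aset P j X Xn g Lam `&` [set l | enorm l <= M]].
Proof.
move=> mX mXn cF mg g0 hj [l0 [Al0 hl0]] H.
set A := Aset P j X Xn g Lam; set Ph := Phi P j gamma X Xn g.
have AL l : A l -> Lam l.
  by rewrite /A /Aset; case: ifP => // _ [].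
have claim : exists M : R, forall l, A l -> M < enorm l -> (Ph l0 <= Ph l)%E.
  have [//|nc] := pselect (exists M : R, forall l, A l -> M < enorm l -> (Ph l0 <= Ph l)%E).
  have hk : forall k : nat, exists l, A l /\ (k%:R < enorm l /\ (Ph l < Ph l0)%E).
    move=> k; apply: contrapT => hn; apply: nc; exists k%:R => l Al kl.
    rewrite leNgt; apply/negP => lt; apply: hn; exists l; done.
  have [lam hlam] := choice hk.
  have lamA k : A (lam k) by have [] := hlam k.
  have cvl : enorm (lam k) @[k --> \oo] --> +oo.
    apply/cvgryPge => r; apply: filterS (nbhs_infty_ger r) => k hk'.
    by have [_ [h _]] := hlam k; exact: le_trans hk' (ltW h).
  have HP := H lam lamA cvl.
  have [c [c1 hc]] : exists c : R, c < 1 /\ (Ph l0 <= c%:E)%E.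
    move: hl0; rewrite -/Ph; case: (Ph l0) => [r||] //.
    - by rewrite lte_fin => r1; exists r; split.
    - by move=> _; exists 0; split => //; rewrite leNye.
  pose eta := Num.min ((1 - c) / (4 + 3 * gamma)) (1/2).
  have pg : 0 < 4 + 3 * gamma by lra.
  have e0 : 0 < eta by rewrite lt_min divr_gt0 ?subr_gt0//; lra.
  have e1 : eta < 1 by rewrite gt_min; apply/orP; right; lra.
  have ec : c <= 1 - (4 + 3 * gamma) * eta.
    have : eta <= (1 - c) / (4 + 3 * gamma) by rewrite ge_min lexx.
    rewrite ler_pdivlMr // => h; lra.
  have [M hM] := @Fcdf_big d T R P X mX eta e0.
  have eta0 : (0 < eta%:E)%E by rewrite lte_fin.
  have [k hkk] := @filter_ex _ (nbhs \oo) _ _ (HP M _ (open_ereal_lt' eta0)).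
  have := @Phi_low d T R P X mX cF n Xn g (lam k) j gamma eta M
    (@mXhat d T R n Xn g Lam (lam k) mXn mg (AL _ (lamA k))) g0 hj (introT andP (conj e0 e1)) hM (ltW hkk).
  have [_ [_ lt]] := hlam k.
  move=> le; have := lt_le_trans lt hc; rewrite ltNge.
  by rewrite (le_trans _ le)// lee_fin.
have [M hM] := claim.
exists (Num.max 1 (Num.max M (enorm l0))); split; first by rewrite lt_max ltr01.
apply/eqP; rewrite eq_le; apply/andP; split.
  apply: ereal_inf_le_tmp => _ [l [Al _] <-]; by exists l.
apply: le_ereal_inf_tmp => _ [l Al <-].
have [lM|Ml] := leP (enorm l) (Num.max 1 (Num.max M (enorm l0))).
  by apply: ereal_inf_lbound; exists l.
apply: (@le_trans _ _ (Ph l0)).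
  apply: ereal_inf_lbound; exists l0 => //; split => //=.
  by rewrite le_max; apply/orP; right; rewrite le_max lexx orbT.
apply: hM => //; apply: le_lt_trans Ml.
by rewrite le_max; apply/orP; right; rewrite le_max lexx.
Qed.
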